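(* For all integers $k\ge 1$ and $\Delta\ge 3$, there exists a connected graph $G_{k,\Delta}$ with maximum degree $\Delta$ satisfying $\gamma_c(G_{k,\Delta})=k$ and $F_c(G_{k,\Delta})=\gamma_c(G_{k,\Delta})(\Delta-2)+2$.
   Context: Forcing process: given a set of initially colored vertices, at each step a colored vertex with exactly one non-colored neighbor forces (colors) that neighbor. A set $S\subseteq V(G)$ is a forcing set if iterating this process from $S$ eventually colors all vertices; it is a connected forcing set if moreover the induced subgraph $G[S]$ is connected. $F_c(G)$ is the minimum cardinality of a connected forcing set of $G$. A connected dominating set is a set $D\subseteq V(G)$ such that every vertex outside $D$ has a neighbor in $D$ and $G[D]$ is connected; $\gamma_c(G)$ is the minimum cardinality of a connected dominating set. *)

(* Defs.v *)
From mathcomp Require Import all_boot.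
Set Implicit Arguments. Unset Strict Implicit. Unset Printing Implicit Defensive.

Section Graphs.
Variable T : finType.
Variable e : rel T.

Definition simple_graph : Prop := symmetric e /\ irreflexive e.

Definition nbhd (v : T) : {set T} := [set u | e v u].
Definition deg (v : T) : nat := #|nbhd v|.
Definition max_degree : nat := \max_(v : T) deg v.

Definition induced_connected (S : {set T}) : Prop :=
  S != set0 /\
  forall x y, x \in S -> y \in S ->
    connect [rel a b | [&& e a b, a \in S & b \in S]] x y.

Definition graph_connected : Prop := induced_connected [set: T].

Definition dominating (D : {set T}) : Prop :=
  forall v, v \notin D -> exists2 u, u \in D & e v u.
Definition connected_dominating (D : {set T}) : Prop :=
  dominating D /\ induced_connected D.

(* One step applies all currently
   available forces (simultaneous application yields the same final
   coloured set as sequential application). *)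
Definition forces (S : {set T}) (v u : T) : bool :=
  [&& v \in S, e v u, u \notin S &
      [forall w, (e v w && (w \notin S)) ==> (w == u)]].
Definition force_step (S : {set T}) : {set T} :=
  S :|: [set u | [exists v, forces S v u]].
(* after #|T| steps the process has stabilised *)
Definition force_closure (S : {set T}) : {set T} := iter #|T| force_step S.
Definition forcing_set (S : {set T}) : Prop := force_closure S = [set: T].
Definition connected_forcing (S : {set T}) : Prop :=
  forcing_set S /\ induced_connected S.

Definition min_card (P : {set T} -> Prop) (m : nat) : Prop :=
  (exists2 S, P S & #|S| = m) /\ (forall S, P S -> m <= #|S|).

Definition conn_domination_number_is (m : nat) : Prop :=
  min_card connected_dominating m.
Definition conn_forcing_number_is (m : nat) : Prop :=
  min_card connected_forcing m.

End Graphs.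

(* Main.v *)
Require Import Defs.
From mathcomp Require Import all_boot zify.
Set Implicit Arguments. Unset Strict Implicit. Unset Printing Implicit Defensive.

Section Cat.
Variables (m d : nat).
Local Notation n := m.+1.

Definition L := (('I_n * 'I_d.+1) + bool)%type.
Definition V := ('I_n + L)%type.

Definition par (l : L) : 'I_n :=
  match l with inl p => p.1 | inr false => ord0 | inr true => ord_max end.

Definition sadj (i j : 'I_n) : bool := (i.+1 == j :> nat) || (j.+1 == i :> nat).

Definition ge (x y : V) : bool :=
  match x, y with
  | inl i, inl j => sadj i j
  | inl i, inr l => par l == i
  | inr l, inl i => par l == i
  | inr _, inr _ => false
  end.

Lemma ge_sym : symmetric ge.
Proof. by case=> [i|l] [j|l'] //=; rewrite /sadj orbC. Qed.

Lemma ge_irr : irreflexive ge.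
Proof. by case=> [i|l] //=; rewrite /sadj; apply/negP; case/orP=> /eqP; lia. Qed.

Lemma sum_ord_eq (p : nat) (a : nat) : \sum_(j < p) (a == j :> nat) = (a < p).
Proof.
elim: p => [|p IH]; first by rewrite big_ord0.
rewrite big_ord_recr /= IH; case: (ltngtP a p) => h.
- by rewrite ltnS ltnW //= addn0; apply/eqP => e; lia.
- by rewrite ltnS leqNgt h /= addn0 ; apply/eqP; lia.
- by subst; rewrite ltnSn.
Qed.

Lemma sum1_nat (I : finType) (P : pred I) : \sum_(x | P x) 1 = \sum_x (P x : nat).
Proof. by rewrite big_mkcond; apply: eq_bigr => x _; case: (P x). Qed.

Lemma deg_inl i : deg ge (inl i) = d.+3.
Proof.
rewrite /deg /nbhd -sum1dep_card big_sumType /= !sum1_nat big_sumType /=.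
rewrite /sadj.
have -> : \sum_(j < n) ((i.+1 == j :> nat) || (j.+1 == i :> nat) : nat) =
   \sum_(j < n) (i.+1 == j :> nat) + (if 0 < i then \sum_(j < n) (i.-1 == j :> nat) else 0).
  case: i => [[|i] hi] /=.
    by rewrite addn0; apply: eq_bigr => j _; rewrite orbF.
  rewrite -big_split /=; apply: eq_bigr => j _.
  case: eqP => h1; case: eqP => h2 //; lia.
rewrite !sum_ord_eq.
have -> : \sum_(p : 'I_n * 'I_d.+1) (p.1 == i : nat) = d.+1.
  rewrite -(pair_big xpredT xpredT (fun a b => ((a, b).1 == i : nat))) /=.
  rewrite (bigD1 i) //= eqxx sum_nat_const card_ord muln1 big1 ?addn0 //.
  by move=> a ha; apply: big1 => b _; rewrite (negbTE ha).
rewrite big_bool /=.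
case: i => i hi /=.
rewrite -val_eqE /=.
case: i hi => [|i] hi /=.
  by case: eqP => h1; case: ltnP => h2; rewrite /= ?addn0; lia.
by case: eqP => h1; case: ltnP => h2; case: ltnP => h3; rewrite /= ?addn0; lia.
Qed.

Lemma deg_inr l : deg ge (inr l) = 1.
Proof.
rewrite /deg /nbhd -sum1dep_card big_sumType /= !sum1_nat [X in _ + X]big1 // addn0.
rewrite (bigD1 (par l)) //= eqxx big1 // => j hj.
by case: eqP => // h; rewrite h eqxx in hj.
Qed.

Lemma max_deg : max_degree ge = d.+3.
Proof.
apply/eqP; rewrite eqn_leq; apply/andP; split.
  by apply/bigmax_leqP => [[i|l]] _; rewrite ?deg_inl ?deg_inr.
by rewrite -(deg_inl ord0) /max_degree (leq_bigmax (inl ord0)).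
Qed.

Definition rS (S : {set V}) := [rel a b | [&& ge a b, a \in S & b \in S]].

Lemma rS_sym S : symmetric (rS S).
Proof. by move=> a b /=; rewrite ge_sym; case: (a \in S); case: (b \in S); rewrite /= ?andbF. Qed.

Lemma conn_spine (S : {set V}) : (forall i, inl i \in S) ->
  induced_connected ge S.
Proof.
move=> hS.
have hsp : forall i, connect (rS S) (inl ord0) (inl i).
  case=> j; elim: j => [|j IH] hj.
    by have -> : Ordinal hj = ord0 by apply: val_inj.
  apply: connect_trans (IH (ltnW hj)) _; apply: connect1.
  by rewrite /= !hS /sadj /= eqxx.
have hall : forall x, x \in S -> connect (rS S) (inl ord0) x.
  case=> [i|l] hx; first exact: hsp.
  apply: connect_trans (hsp (par l)) _; apply: connect1.
  by rewrite /= hS hx eqxx.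
split; first by apply/set0Pn; exists (inl ord0).
move=> x y hx hy; apply: connect_trans (hall y hy).
by rewrite (sym_connect_sym (rS_sym S)); apply: hall.
Qed.

Lemma conn_first (r : rel V) x y : connect r x y -> x != y -> exists z, r x z.
Proof.
case/connectP=> [[|z p]] /=; first by move=> _ ->; rewrite eqxx.
by case/andP=> h _ _ _; exists z.
Qed.

Lemma cds_spine (D0 : {set V}) : connected_dominating ge D0 -> forall i, inl i \in D0.
Proof.
case=> hdom [hne hconn] i; apply/negPn/negP => hi.
pose y : V := inr (inl (i, ord0)).
have hy : y \in D0.
  apply/negPn/negP => /hdom [[j|l] hu] //= /eqP hj.
  by move: hu; rewrite -hj (negbTE hi).
have [u hu hneq] : exists2 u, u \in D0 & u != y.
  pose z : V := inr (inr false).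
  case hz: (z \in D0); first by exists z.
  case: (hdom z (negbT hz)) => [[j|l] hu] //= _; by exists (inl j).
have hyu : y != u by rewrite eq_sym.
case: (conn_first (hconn y u hy hu) hyu) => w.
case: w => [j|l] //= /andP [/eqP hj /andP [_ hjD]].
by move: hjD; rewrite -hj (negbTE hi).
Qed.

Definition spine : {set V} := [set inl i | i in 'I_n].

Lemma spine_cds : connected_dominating ge spine.
Proof.
split; last by apply: conn_spine => i; apply: imset_f.
case=> [i|l] h; first by rewrite imset_f in h.
by exists (inl (par l)); rewrite ?imset_f //= eqxx.
Qed.

Lemma gamma_c : conn_domination_number_is ge n.
Proof.
split.
  by exists spine; [exact: spine_cds | rewrite card_imset ?card_ord //; move=> a b [] ].
move=> D0 hD; apply: (@leq_trans #|spine|).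
  by rewrite card_imset ?card_ord //; move=> a b [].
apply: subset_leq_card; apply/subsetP => x /imsetP [i _ ->]; exact: cds_spine.
Qed.

Definition A (C : {set V}) : {set 'I_n} :=
  [set i | [exists w, ((w == inl i) || ge (inl i) w) && (w \notin C)]].
Definition Inv (C : {set V}) := forall l, inr l \in C -> inl (par l) \in C.

Definition gf (C : {set V}) (i : 'I_n) : V :=
  odflt (inl i) [pick w | ge (inl i) w && (w \notin C)].

Lemma sub_step (C : {set V}) : C \subset force_step ge C.
Proof. exact: subsetUl. Qed.

Lemma A_mono (C C' : {set V}) : C \subset C' -> A C' \subset A C.
Proof.
move=> sub; apply/subsetP => i; rewrite !inE => /existsP [w /andP [h1 h2]].
apply/existsP; exists w; rewrite h1 /=; apply: contra h2; exact: (subsetP sub).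
Qed.

Lemma forcer_spine (C : {set V}) v u : Inv C -> forces ge C v u -> exists i, v = inl i.
Proof.
move=> hI; case: v => [i|l]; first by exists i.
case/and4P => hv; case: u => [j|l'] //= /eqP hj hu _.
by move: hu; rewrite -hj hI.
Qed.

Lemma step_inv (C : {set V}) : Inv C -> Inv (force_step ge C).
Proof.
move=> hI l; rewrite /force_step !inE => /orP [h|].
  by rewrite hI.
case/existsP => v /and4P [hv /= he _ _]; apply/orP; left.
by case: v hv he => [i|l'] //= hv /eqP ->.
Qed.

Lemma arith a a' b b' x x' N : a + b = N -> a' + b' = N -> a <= a' -> x' <= x ->
  a' - a <= x - x' -> b + x' <= b' + x.
Proof. lia. Qed.

Lemma step_card (C : {set V}) : Inv C ->
  #|~: C| + #|A (force_step ge C)| <= #|~: force_step ge C| + #|A C|.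
Proof.
move=> hI; set C' := force_step ge C.
have sCC : C \subset C' := sub_step C; have sAA := A_mono sCC.
have hsub : C' :\: C \subset gf C @: (A C :\: A C').
  apply/subsetP => u; rewrite !inE => /andP [huC /orP [hC|/existsP [v hf]]].
    by rewrite hC in huC.
  have [i ei] := forcer_spine hI hf; subst v.
  case/and4P: hf => hv he hu /forallP hall.
  have hu' : u \in C' by rewrite /C' /force_step !inE; apply/orP; right; apply/existsP; exists (inl i); rewrite /forces hv he hu; exact/forallP.
  apply/imsetP; exists i.
    rewrite !inE; apply/andP; split.
      apply/negP => /existsP [w /andP [/orP [/eqP -> | hw] hwC]].
        by move: hwC; rewrite (subsetP sCC) // .
      have hwC0 : w \notin C by apply: contra hwC; exact: (subsetP sCC).
      have := hall w; rewrite hw hwC0 /= => /eqP ew.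
      by move: hwC; rewrite ew hu'.
    by apply/existsP; exists u; rewrite he hu orbT.
  rewrite /gf; case: pickP => [w /andP [hw hwC]|].
    by move: (hall w); rewrite hw hwC /= => /eqP.
  by move/(_ u); rewrite he hu.
have c1 := leq_trans (subset_leq_card hsub) (leq_imset_card _ _).
move: c1; rewrite !cardsDS //.
move=> h.
exact: (arith (cardsC C) (cardsC C') (subset_leq_card sCC) (subset_leq_card sAA) h).
Qed.

Lemma chain b0 b1 bt x0 x1 xt : b0 + x1 <= b1 + x0 -> b1 + xt <= bt + x1 -> b0 + xt <= bt + x0.
Proof. lia. Qed.

Lemma iter_card t (C : {set V}) : Inv C ->
  #|~: C| + #|A (iter t (force_step ge) C)| <= #|~: iter t (force_step ge) C| + #|A C|.
Proof.
elim: t C => [|t IH] C hI /=; first by rewrite addnC.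
have := IH _ (step_inv hI); rewrite -!iterSr !iterS => h2.
exact: chain (step_card hI) h2.
Qed.

Lemma forcing_bound t (S : {set V}) : Inv S -> iter t (force_step ge) S = setT -> #|~: S| <= n.
Proof.
move=> hI hS.
have := iter_card t hI; rewrite hS.
have -> : A setT = set0 by apply/setP => i; rewrite !inE; apply/existsP => [[w]]; rewrite inE andbF.
rewrite setCT !cards0 addn0 add0n => h; apply: leq_trans h _.
by rewrite -[X in _ <= X]card_ord max_card.
Qed.

Lemma card_V (C : {set V}) : #|C| + #|~: C| = n + (n * d.+1 + 2).
Proof. by rewrite cardsC !card_sum card_prod !card_ord card_bool. Qed.

Definition X0 : {set V} := [set (inr (inl (i, ord0)) : V) | i in 'I_n].
Definition S0 : {set V} := ~: X0.

Lemma S0_step : force_step ge S0 = setT.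
Proof.
apply/setP => x; rewrite !inE; case hx: (x \in X0) => //=.
case/imsetP: hx => i _ ->; apply/existsP; exists (inl i).
rewrite /forces /S0 !inE /= eqxx imset_f //=.
have -> : (inl i : V) \in X0 = false by apply/negbTE/negP => /imsetP [j _].
rewrite /=; apply/forallP => w; apply/implyP; rewrite !inE negbK.
case: w => [j|[[j b]|bb]] //=; first by move=> /andP [_ /imsetP [? _]].
  case/andP => /eqP -> /imsetP [j' _ [-> ->]] //.
by move=> /andP [_ /imsetP [? _]].
Qed.

Lemma iter_setT t : iter t (force_step ge) setT = setT.
Proof. by elim: t => //= t ->; rewrite /force_step setTU. Qed.

Lemma S0_forcing : connected_forcing ge S0.
Proof.
split.
  rewrite /forcing_set /force_closure.
  have : 0 < #|S0| + #|~: S0| by rewrite card_V.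
  rewrite cardsC; case: #|_| => // t _.
  by rewrite iterSr S0_step iter_setT.
apply: conn_spine => i; rewrite /S0 !inE; apply/negP => /imsetP [j _] //.
Qed.

Lemma card_S0 : #|S0| = n * d.+1 + 2.
Proof.
have := card_V S0; rewrite /S0 setCK card_imset; last by move=> a b [] ->.
rewrite card_ord; lia.
Qed.

Lemma arith2 (n0 p a b : nat) : 0 < p -> a + b = n0 + (p + 2) -> b <= n0 -> a <= 2 -> False.
Proof. lia. Qed.

Lemma single_leaf (S : {set V}) l : S \subset [set inr l] -> inr l \in S ->
  Inv (force_step ge S) /\ #|force_step ge S| <= 2.
Proof.
move=> sub hl.
have hforce : forces ge S (inr l) (inl (par l)).
  rewrite /forces hl /= eqxx /=; apply/andP; split.
    by apply/negP => /(subsetP sub); rewrite inE.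
  apply/forallP => w; apply/implyP; case: w => [j|l'] //= /andP [/eqP -> _] //.
have hsub : force_step ge S \subset [set inr l; inl (par l)].
  apply/subsetP => x; rewrite !inE => /orP [/(subsetP sub)|]; first by rewrite inE => ->.
  case/existsP => v /and4P [hv]; move: (subsetP sub _ hv); rewrite inE => /eqP ->.
  by case: x => [j|l'] //= /eqP -> _ _; rewrite eqxx.
split.
  move=> l' /(subsetP hsub); rewrite !inE => /orP [/eqP [->]|//].
  by apply/orP; right; apply/existsP; exists (inr l).
by apply: leq_trans (subset_leq_card hsub) _; rewrite cards2; case: (_ != _).
Qed.

Lemma forcing_lower (S : {set V}) : connected_forcing ge S -> n * d.+1 + 2 <= #|S|.
Proof.
case=> hF [hne hconn].
rewrite /forcing_set /force_closure in hF.
case: (boolP [forall l, (inr l \in S) ==> (S \subset [set inr l])]) => hall.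
- have [x hx] := set0Pn _ hne.
  case: x hx => [i|l] hx.
    have hI : Inv S.
      move=> l hl; move/forallP: hall => /(_ l); rewrite hl /= => /subsetP /(_ _ hx).
      by rewrite inE.
    have := forcing_bound hI hF; have := card_V S; lia.
  move/forallP: hall => /(_ l); rewrite hx /= => sub.
  have [hI hc] := single_leaf sub hx.
  move: hF; have : 0 < #|S| + #|~: S| by rewrite card_V.
  rewrite cardsC; case: #|_| => // t _; rewrite iterSr => hF.
  exfalso; apply: (arith2 _ (card_V (force_step ge S)) (forcing_bound hI hF) hc).
  by rewrite muln_gt0.
- have hI : Inv S.
    move=> l hl; move/forallPn: hall => [l0]; rewrite negb_imply => /andP [hl0 nsub].
    have [u hu hneq] : exists2 u, u \in S & u != inr l.
      case: (subsetPn nsub) => u hu; rewrite inE => hne'.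
      case: (eqVneq u (inr l)) => [eul|]; last by exists u.
      by exists (inr l0) => //; rewrite -eul eq_sym.
    have hyu : inr l != u by rewrite eq_sym.
    case: (conn_first (hconn _ _ hl hu) hyu) => [[j|l']] //= /and3P [/eqP -> _ //].
  have := forcing_bound hI hF; have := card_V S; lia.
Qed.

Lemma Fc : conn_forcing_number_is ge (n * d.+1 + 2).
Proof.
split; first by exists S0; [exact: S0_forcing | exact: card_S0].
exact: forcing_lower.
Qed.
End Cat.

Theorem proposition4 (k D : nat) (hk : 1 <= k) (hD : 3 <= D) :
  exists (T : finType) (e : rel T),
    [/\ simple_graph e, graph_connected e, max_degree e = D,
        conn_domination_number_is e k &
        conn_forcing_number_is e (k * (D - 2) + 2)].
Proof.
case: k hk => [//|m] _; case: D hD => [|[|[|d]]] // _.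
have -> : d.+3 - 2 = d.+1 by [].
exists (V m d), (@ge m d); split.
- by split; [exact: ge_sym | exact: ge_irr].
- by apply: conn_spine => i; rewrite inE.
- exact: max_deg.
- exact: gamma_c.
- exact: Fc.
Qed.
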